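(* Let $d$ be a positive square-free integer with $d\equiv 7\pmod 8$, let $K=\mathbb{Q}[\sqrt{-d}]$ with ring of integers $\mathfrak{o}_K$, and let $u=u_1+u_ii+u_jj+u_kk\in\mathcal{U}(\mathbb{H}(\mathfrak{o}_K))$. Then: (1) $u^2=2u_1u-N(u)$; (2) if $N(u)=1$, then $u$ is a torsion unit if and only if $u_1\in\{-1,0,1\}$ and the order of $u$ is $1$, $2$ or $4$; (3) if $N(u)=-1$, then $u$ has infinite order.
   Context: $\mathbb{H}(K)=\left(\frac{-1,-1}{K}\right)$ is the quaternion algebra over $K$ with $K$-basis $1,i,j,k$, $i^2=j^2=-1$, $k=ji=-ij$; $\mathbb{H}(\mathfrak{o}_K)$ is the set of $\mathfrak{o}_K$-linear combinations of $1,i,j,k$. The norm is $N(x_1+x_ii+x_jj+x_kk)=x_1^2+x_i^2+x_j^2+x_k^2$. *)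

(* Defs.v *)
From HB Require Import structures.
From mathcomp Require Import all_boot all_order all_algebra all_field.
From mathcomp Require Import algC algnum.
Set Implicit Arguments. Unset Strict Implicit. Unset Printing Implicit Defensive.
Import Order.TTheory GRing.Theory Num.Theory.
Local Open Scope ring_scope.

Definition squarefree_nat (d : nat) : Prop :=
  forall p : nat, prime p -> ~~ (p * p %| d)%N.

Definition sqrt_negd (d : nat) : algC := sqrtC (- (d%:R)).

Definition inK (d : nat) (x : algC) : Prop :=
  exists a b : rat, x = ratr a + ratr b * sqrt_negd d.

Definition inOK (d : nat) (x : algC) : Prop := inK d x /\ x \in Aint.

Record quat := Quat { q1 : algC; qi : algC; qj : algC; qk : algC }.

(* multiplication with i^2 = j^2 = -1, k = ji = -ij
   (hence jk = -i, kj = i, ki = -j, ik = j, k^2 = -1) *)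
Definition qmul (a b : quat) : quat :=
  Quat (q1 a * q1 b - qi a * qi b - qj a * qj b - qk a * qk b)
       (q1 a * qi b + qi a * q1 b - qj a * qk b + qk a * qj b)
       (q1 a * qj b + qj a * q1 b + qi a * qk b - qk a * qi b)
       (q1 a * qk b + qk a * q1 b - qi a * qj b + qj a * qi b).

Definition qadd (a b : quat) : quat :=
  Quat (q1 a + q1 b) (qi a + qi b) (qj a + qj b) (qk a + qk b).
Definition qscale (c : algC) (a : quat) : quat :=
  Quat (c * q1 a) (c * qi a) (c * qj a) (c * qk a).
Definition qconst (c : algC) : quat := Quat c 0 0 0.
Definition qone : quat := qconst 1.
Definition qsub (a b : quat) : quat := qadd a (qscale (-1) b).

Fixpoint qpow (a : quat) (n : nat) : quat :=
  match n with 0%N => qone | n'.+1 => qmul (qpow a n') a end.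

Definition qnorm (a : quat) : algC :=
  q1 a ^+ 2 + qi a ^+ 2 + qj a ^+ 2 + qk a ^+ 2.

Definition inHOK (d : nat) (a : quat) : Prop :=
  inOK d (q1 a) /\ inOK d (qi a) /\ inOK d (qj a) /\ inOK d (qk a).

Definition unitHOK (d : nat) (a : quat) : Prop :=
  inHOK d a /\ exists b, inHOK d b /\ qmul a b = qone /\ qmul b a = qone.

Definition torsion (a : quat) : Prop := exists n : nat, (0 < n)%N /\ qpow a n = qone.

Definition has_order (a : quat) (n : nat) : Prop :=
  (0 < n)%N /\ qpow a n = qone /\
  forall m : nat, (0 < m)%N -> (m < n)%N -> qpow a m <> qone.

Definition infinite_order (a : quat) : Prop :=
  forall n : nat, (0 < n)%N -> qpow a n <> qone.

(* Main.v *)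
Require Import Defs.
From mathcomp Require Import all_boot all_order all_algebra all_field.
From mathcomp Require Import algC algnum.
From mathcomp Require Import zify ring.
Import Order.TTheory GRing.Theory Num.Theory.

Lemma sq_odd (x : nat) : odd x -> exists j, x * x = 8 * j + 1.
Proof.
move=> ox; have ex : x = (x./2).*2 + 1 by rewrite -[x in LHS]odd_double_half ox addnC.
set k := x./2 in ex.
have [j hj] : exists j, k * k + k = 2 * j.
  exists ((k*k+k)./2); rewrite -[LHS]odd_double_half.
  have -> : odd (k*k + k) = false by rewrite oddD oddM; case: (odd k).
  by rewrite add0n -mul2n.
exists j; rewrite ex; nia.
Qed.

Lemma sq_even (x : nat) : ~~ odd x -> exists k, x = 2 * k.
Proof. move=> ex; exists x./2; rewrite -[x in LHS]odd_double_half (negbTE ex) add0n; lia. Qed.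

Arguments sq_odd {x}.
Arguments sq_even {x}.

Lemma sq_cases (x : nat) : exists a, x * x = 8 * a + 1 \/ x * x = 4 * a.
Proof.
case ox: (odd x); first by have [a ha] := sq_odd ox; exists a; left.
have [k hk] := sq_even (negbT ox); exists (k*k); right; rewrite hk; nia.
Qed.

Lemma no3sq (d : nat) : (d %% 8 = 7)%N -> forall w x y z : nat,
  x * x + y * y + z * z = d * (w * w) -> w = 0.
Proof.
move=> hd w; elim: w {-2}w (leqnn w) => [|n IH] w lw x y z E; first by lia.
have hd' : d = 8 * (d %/ 8) + 7 by rewrite {1}(divn_eq d 8) hd; lia.
case ow: (odd w).
  exfalso. have [jw hw] := sq_odd ow.
  rewrite hw hd' in E.
  have e2 : (8 * (d %/ 8) + 7) * (8 * jw + 1) = 8 * (d %/ 8 * (8 * jw + 1) + 7 * jw) + 7 by nia.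
  rewrite e2 in E.
  have [a ha] := sq_cases x; have [b hb] := sq_cases y; have [c hc] := sq_cases z.
  move: E ha hb hc; generalize (x*x) (y*y) (z*z) (d %/ 8 * (8 * jw + 1) + 7 * jw).
  move=> X Y Z M; lia.
have [k hk] := sq_even (negbT ow).
case: (posnP w) => [->//|w0].
have kn : k <= n by lia.
have hwk : d * (w * w) = 4 * (d * (k * k)) by rewrite hk; nia.
rewrite hwk in E.
case ox: (odd x).
  exfalso; have [a ha] := sq_odd ox; have [b hb] := sq_cases y; have [c hc] := sq_cases z.
  move: E ha hb hc; generalize (x*x) (y*y) (z*z) (d * (k * k)) => X Y Z M; lia.
case oy: (odd y).
  exfalso; have [a ha] := sq_odd oy; have [b hb] := sq_cases x; have [c hc] := sq_cases z.
  move: E ha hb hc; generalize (x*x) (y*y) (z*z) (d * (k * k)) => X Y Z M; lia.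
case oz: (odd z).
  exfalso; have [a ha] := sq_odd oz; have [b hb] := sq_cases y; have [c hc] := sq_cases x.
  move: E ha hb hc; generalize (x*x) (y*y) (z*z) (d * (k * k)) => X Y Z M; lia.
have [a' ha'] := sq_even (negbT ox); have [b' hb'] := sq_even (negbT oy);
have [c' hc'] := sq_even (negbT oz).
have : k = 0.
  apply: (IH k kn a' b' c').
  have e3 : x * x + y * y + z * z = 4 * (a' * a' + b' * b' + c' * c') by rewrite ha' hb' hc'; nia.
  rewrite e3 in E. lia.
lia.
Qed.
Local Open Scope ring_scope.
Lemma sqP (x : int) : x ^+ 2 = Posz (absz x * absz x).
Proof. by rewrite PoszM abszE -normrM -expr2 ger0_norm // sqr_ge0. Qed.

Lemma no3sq_int (d : nat) : (d %% 8 = 7)%N -> forall x y z w : int,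
  x ^+ 2 + y ^+ 2 + z ^+ 2 = (d%:Z) * w ^+ 2 -> w = 0.
Proof.
move=> hd x y z w; rewrite !sqP -!PoszD -PoszM => /eqP; rewrite eqz_nat => /eqP E.
have := @no3sq d hd _ _ _ _ E => /eqP; rewrite absz_eq0 => /eqP //.
Qed.

Lemma no3sq_rat (d : nat) : (d %% 8 = 7)%N -> forall c1 c2 c3 m : rat,
  c1 ^+ 2 + c2 ^+ 2 + c3 ^+ 2 = d%:R * m ^+ 2 -> m = 0.
Proof.
move=> hd c1 c2 c3 m E.
set D : int := denq c1 * denq c2 * denq c3 * denq m.
have D0 : (D%:~R : rat) != 0.
  by rewrite intr_eq0 /D !mulf_neq0 // denq_neq0.
have hc : forall c : rat, (denq c %| D)%Z -> exists x : int, D%:~R * c = x%:~R.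
  move=> c /dvdzP [k hk]; exists (k * numq c).
  rewrite -[c in LHS]divq_num_den hk rmorphM /= rmorphM /=.
  have := denq_neq0 c; rewrite -(intr_eq0 rat) => h.
  by field.
have [x1 h1] : exists x : int, D%:~R * c1 = x%:~R.
  by apply hc; apply/dvdzP; exists (denq c2 * denq c3 * denq m); rewrite /D; ring.
have [x2 h2] : exists x : int, D%:~R * c2 = x%:~R.
  by apply hc; apply/dvdzP; exists (denq c1 * denq c3 * denq m); rewrite /D; ring.
have [x3 h3] : exists x : int, D%:~R * c3 = x%:~R.
  by apply hc; apply/dvdzP; exists (denq c1 * denq c2 * denq m); rewrite /D; ring.
have [x4 h4] : exists x : int, D%:~R * m = x%:~R.
  by apply hc; apply/dvdzP; exists (denq c1 * denq c2 * denq c3); rewrite /D; ring.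
have E2 : (x1 ^+ 2 + x2 ^+ 2 + x3 ^+ 2)%:~R = ((d%:Z) * x4 ^+ 2)%:~R :> rat.
  rewrite !rmorphD !rmorphM /= -h1 -h2 -h3 -h4.
  have -> : (d%:Z)%:~R = d%:R :> rat by [].
  transitivity ((D%:~R : rat) ^+ 2 * (c1 ^+ 2 + c2 ^+ 2 + c3 ^+ 2)); first ring.
  rewrite E; ring.
have := @no3sq_int d hd _ _ _ _ (intr_inj E2) => x40.
move: h4; rewrite x40 mulr0z => /eqP; rewrite mulf_eq0 (negbTE D0) /= => /eqP //.
Qed.

Lemma sum4sq0 (x0 x1 x2 x3 : rat) : x0 ^+ 2 + x1 ^+ 2 + x2 ^+ 2 + x3 ^+ 2 = 0 ->
  [/\ x0 = 0, x1 = 0, x2 = 0 & x3 = 0].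
Proof.
move=> /eqP; rewrite !paddr_eq0 ?addr_ge0 ?sqr_ge0 // !sqrf_eq0.
by case/andP => /andP [/andP [/eqP -> /eqP ->] /eqP ->] /eqP ->.
Qed.

Arguments sum4sq0 {x0 x1 x2 x3}.
Lemma anis4_rat (d : nat) : (d %% 8 = 7)%N -> forall a0 a1 a2 a3 b0 b1 b2 b3 : rat,
  a0 * b0 + a1 * b1 + a2 * b2 + a3 * b3 = 0 ->
  a0 ^+ 2 + a1 ^+ 2 + a2 ^+ 2 + a3 ^+ 2 = d%:R * (b0 ^+ 2 + b1 ^+ 2 + b2 ^+ 2 + b3 ^+ 2) ->
  [/\ a0 = 0, a1 = 0, a2 = 0 & a3 = 0] /\ [/\ b0 = 0, b1 = 0, b2 = 0 & b3 = 0].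
Proof.
move=> hd a0 a1 a2 a3 b0 b1 b2 b3 Eab Eaa.
set B := b0 ^+ 2 + b1 ^+ 2 + b2 ^+ 2 + b3 ^+ 2 in Eaa.
have Eu : (a0*b1 - a1*b0 + a2*b3 - a3*b2) ^+ 2 + (a0*b2 - a1*b3 - a2*b0 + a3*b1) ^+ 2
   + (a0*b3 + a1*b2 - a2*b1 - a3*b0) ^+ 2 = d%:R * B ^+ 2.
  transitivity ((a0 ^+ 2 + a1 ^+ 2 + a2 ^+ 2 + a3 ^+ 2) * B - (a0 * b0 + a1 * b1 + a2 * b2 + a3 * b3) ^+ 2).
    rewrite /B; ring.
  rewrite Eab Eaa; ring.
have B0 := @no3sq_rat d hd _ _ _ _ Eu.
have [-> -> -> ->] := sum4sq0 B0.
split => //; apply: sum4sq0; by rewrite Eaa B0 mulr0.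
Qed.


Section K.
Variable d : nat.
Hypothesis d0 : (0 < d)%N.
Local Notation s := (sqrt_negd d).

Lemma s2 : s ^+ 2 = - d%:R.
Proof. by rewrite /sqrt_negd sqrtCK. Qed.

Lemma s_nreal : s \isn't Num.real.
Proof.
rewrite realEsqr s2 le0r oppr_eq0 pnatr_eq0 oppr_gt0.
rewrite negb_or -lt0n d0 /= lt_gtF // ltr0n //.
Qed.

Lemma indep (A B : rat) : ratr A + ratr B * s = 0 -> A = 0 /\ B = 0.
Proof.
move=> E.
have B0 : B = 0.
  apply/eqP; apply/negPn/negP => nB.
  have hB : (ratr B : algC) != 0 by rewrite fmorph_eq0.
  have : s = - ratr A / ratr B.
    have E' : ratr B * s = - ratr A.
      by apply/eqP; rewrite -addr_eq0 addrC E.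
    by rewrite -E' mulrC mulKf.
  move=> hs; move: s_nreal; rewrite hs rpredM ?rpredN ?rpredV ?Creal_Crat ?Crat_rat //.
move: E; rewrite B0 rmorph0 mul0r addr0 => /eqP; rewrite fmorph_eq0 => /eqP //.
Qed.

Lemma real_inK x : inK d x -> x \is Num.real -> x \in Crat.
Proof.
move=> [p [q ->]] hr.
case: (eqVneq q 0) => [->|nq]; first by rewrite rmorph0 mul0r addr0 Crat_rat.
have hq : (ratr q : algC) != 0 by rewrite fmorph_eq0.
exfalso; move: s_nreal.
have -> : s = (ratr p + ratr q * s - ratr p) / ratr q.
  by rewrite addrAC subrr add0r mulrC mulKf.
rewrite rpredM //; first by rewrite rpredB // Creal_Crat ?Crat_rat.
by rewrite rpredV Creal_Crat ?Crat_rat.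
Qed.

Lemma inK_mul x y : inK d x -> inK d y -> inK d (x * y).
Proof.
move=> [p [q ->]] [p' [q' ->]].
exists (p * p' - d%:R * q * q'), (p * q' + q * p').
rewrite !(rmorphD, rmorphN, rmorphM) /= rmorph_nat.
transitivity (ratr p * ratr p' + ratr q * ratr q' * s ^+ 2 + (ratr p * ratr q' + ratr q * ratr p') * s); first ring.
rewrite s2; ring.
Qed.

Hypothesis hd : (d %% 8 = 7)%N.

Lemma anis4 x0 x1 x2 x3 : inK d x0 -> inK d x1 -> inK d x2 -> inK d x3 ->
  x0 ^+ 2 + x1 ^+ 2 + x2 ^+ 2 + x3 ^+ 2 = 0 -> [/\ x0 = 0, x1 = 0, x2 = 0 & x3 = 0].
Proof.
move=> [p0 [q0 ->]] [p1 [q1 ->]] [p2 [q2 ->]] [p3 [q3 ->]] E.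
have E' : ratr (p0^+2 + p1^+2 + p2^+2 + p3^+2 - d%:R * (q0^+2 + q1^+2 + q2^+2 + q3^+2))
   + ratr (2 * (p0 * q0 + p1 * q1 + p2 * q2 + p3 * q3)) * s = 0.
  rewrite -E !(rmorphD, rmorphN, rmorphM, rmorphXn) /= !rmorph_nat.
  have hd' : (d%:R : algC) = - s ^+ 2 by rewrite s2 opprK.
  rewrite hd'; ring.
have [A0 B0] := indep _ _ E'.
have Eaa := subr0_eq A0.
have Eab : p0 * q0 + p1 * q1 + p2 * q2 + p3 * q3 = 0.
  by move: B0 => /eqP; rewrite mulf_eq0 pnatr_eq0 /= => /eqP.
have [[-> -> -> ->] [-> -> -> ->]] := @anis4_rat d hd _ _ _ _ _ _ _ _ Eab Eaa.
by rewrite rmorph0 mul0r addr0.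
Qed.

End K.


Lemma eq_byN (x y h : algC) : h = 0 -> x - y = - h -> x = y.
Proof. by move=> -> /eqP; rewrite oppr0 subr_eq0 => /eqP. Qed.

Arguments eq_byN {x y h}.

Lemma qmulA a b c : qmul (qmul a b) c = qmul a (qmul b c).
Proof. case: a => ? ? ? ?; case: b => ? ? ? ?; case: c => ? ? ? ?; rewrite /qmul /=; congr Quat; ring. Qed.

Lemma qmulZr a l b : qmul a (qscale l b) = qscale l (qmul a b).
Proof. case: a => ? ? ? ?; case: b => ? ? ? ?; rewrite /qmul /qscale /=; congr Quat; ring. Qed.

Lemma qscaleA l m b : qscale l (qscale m b) = qscale (l * m) b.
Proof. case: b => ? ? ? ?; rewrite /qscale /=; congr Quat; ring. Qed.

Lemma qmul1l a : qmul qone a = a.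
Proof. case: a => ? ? ? ?; rewrite /qmul /qone /qconst /=; congr Quat; ring. Qed.

Lemma qscale1 a : qscale 1 a = a.
Proof. case: a => ? ? ? ?; rewrite /qscale /=; congr Quat; ring. Qed.

Lemma part1 u : qmul u u = qsub (qscale (2 * q1 u) u) (qconst (qnorm u)).
Proof. case: u => ? ? ? ?; rewrite /qmul /qsub /qadd /qscale /qconst /qnorm /=; congr Quat; ring. Qed.

Lemma qpow_scalar u m : qi u = 0 -> qj u = 0 -> qk u = 0 -> qpow u m = Quat (q1 u ^+ m) 0 0 0.
Proof.
case: u => a b c e /= -> -> ->; elim: m => [|m IH] //=.
rewrite IH /qmul /=; congr Quat; rewrite ?exprSr; ring.
Qed.

Lemma fix_one (x c : algC) : c = x * c -> c != 0 -> x = 1.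
Proof. by move=> E nc; apply: (mulIf nc); rewrite mul1r -E. Qed.

Arguments fix_one {x c}.

Lemma torsion_root u (l : algC) n : qpow u n = qone ->
  l ^+ 2 - 2 * q1 u * l + qnorm u = 0 -> l ^+ n = 1.
Proof.
move=> hn hl.
set mu := 2 * q1 u - l.
set w := qsub u (qconst mu).
have Hw : qmul u w = qscale l w.
  rewrite /w /mu; clear w mu; move: hl; case: u {hn} => a b c e; rewrite /qnorm /= => hl.
  rewrite /qmul /qsub /qadd /qscale /qconst /=; congr Quat; try ring.
  refine (eq_byN hl _); ring.
have Hp : forall m, qmul (qpow u m) w = qscale (l ^+ m) w.
  elim=> [|m IH] /=; first by rewrite qmul1l expr0 qscale1.
  by rewrite qmulA Hw qmulZr IH qscaleA exprSr mulrC.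
have := Hp n; rewrite hn qmul1l => Hw'.
have c1 := congr1 q1 Hw'; have ci := congr1 qi Hw'.
have cj := congr1 qj Hw'; have ck := congr1 qk Hw'.
move: c1 ci cj ck; rewrite /w /qsub /qadd /qscale /qconst /= !mulr0 !addr0.
move=> c1 ci cj ck.
case: (eqVneq (q1 u + -1 * mu) 0) => [h1|h1]; last exact: fix_one c1 h1.
case: (eqVneq (qi u) 0) => [hi|hi]; last exact: fix_one ci hi.
case: (eqVneq (qj u) 0) => [hj|hj]; last exact: fix_one cj hj.
case: (eqVneq (qk u) 0) => [hk|hk]; last exact: fix_one ck hk.
have el : l = q1 u.
  have -> : l = q1 u + (q1 u + -1 * mu) by rewrite /mu; ring.
  by rewrite h1 addr0.
have := congr1 q1 hn; rewrite qpow_scalar //= el //.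
Qed.


Lemma norm1 (l : algC) n : (0 < n)%N -> l ^+ n = 1 -> `|l| = 1.
Proof.
move=> n0 h; have /eqP := congr1 (fun x => `|x|) h.
by rewrite normrX normr1 pexprn_eq1 // -[(n == 0)%N]negbK -lt0n n0 /= => /eqP.
Qed.

Arguments norm1 {l n}.

Lemma tors_roots u n : (0 < n)%N -> qpow u n = qone ->
  exists l m : algC, [/\ `|l| = 1, `|m| = 1, l + m = 2 * q1 u & l * m = qnorm u].
Proof.
move=> n0 hn.
set t := q1 u; set N := qnorm u.
set r := sqrtC (t ^+ 2 - N).
have hr : r ^+ 2 = t ^+ 2 - N by rewrite /r sqrtCK.
exists (t + r), (t - r); split; last 2 first.
- ring.
- transitivity (t ^+ 2 - r ^+ 2); first ring. rewrite hr; ring.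
- apply: (norm1 n0); apply: (@torsion_root u _ n hn).
  transitivity (r ^+ 2 - t ^+ 2 + N); first (rewrite /t /N; ring). rewrite hr; ring.
- apply: (norm1 n0); apply: (@torsion_root u _ n hn).
  transitivity (r ^+ 2 - t ^+ 2 + N); first (rewrite /t /N; ring). rewrite hr; ring.
Qed.

Lemma int_small (x : algC) : x \is a Num.int -> `|x| <= 1 -> x = -1 \/ x = 0 \/ x = 1.
Proof.
case/intrP => z ->; rewrite -intr_norm lerz1 ler_norml => /andP [h1 h2].
have : z = -1 \/ z = 0 \/ z = 1 by lia.
by case=> [->|[->|->]]; [left|right;left|right;right].
Qed.

Lemma inK1 d : inK d 1.
Proof. by exists 1, 0; rewrite rmorph1 rmorph0 mul0r addr0. Qed.
Lemma inK0 d : inK d 0.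
Proof. by exists 0, 0; rewrite rmorph0 mul0r addr0. Qed.

Lemma m1neq1 : (-1 : algC) != 1.
Proof. by rewrite lt_eqF // (lt_trans (ltrN10 _) ltr01). Qed.

Lemma le2 (t : algC) l m : `|l| = 1 -> `|m| = 1 -> l + m = 2 * t -> `|t| <= 1.
Proof.
move=> nl nm slm.
have h : `|2 * t| <= 2 * 1.
  rewrite -slm mulr1; apply: le_trans (ler_normD _ _) _; rewrite nl nm //.
by rewrite normrM ger0_norm ?ler0n // ler_pM2l ?ltr0n in h.
Qed.

Theorem mainTheorem14 (d : nat) (u : quat) :
  (0 < d)%N -> squarefree_nat d -> (d %% 8 = 7)%N ->
  unitHOK d u ->
  [/\ qmul u u = qsub (qscale (2 * q1 u) u) (qconst (qnorm u)),
      qnorm u = 1 ->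
        (torsion u <-> (q1 u = -1 \/ q1 u = 0 \/ q1 u = 1)) /\
        (torsion u -> has_order u 1 \/ has_order u 2 \/ has_order u 4)
    & qnorm u = -1 -> infinite_order u].
Proof.
move=> d0 _ hd [[[K1 A1] [[Ki Ai] [[Kj Aj] [Kk Ak]]]] _].
have two0 : (2 : algC) != 0 by rewrite pnatr_eq0.
split; first exact: part1.
- move=> N1.
  have tors_t : torsion u -> q1 u = -1 \/ q1 u = 0 \/ q1 u = 1.
    case=> n [n0 hn]; have [l [m [nl nm slm plm]]] := tors_roots _ _ n0 hn.
    rewrite N1 in plm.
    have l0 : l != 0 by rewrite -normr_eq0 nl oner_eq0.
    have m0 : m != 0 by rewrite -normr_eq0 nm oner_eq0.
    have cl : l^* = m by apply: (mulfI l0); rewrite -normCK nl expr1n plm.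
    have cm : m^* = l by apply: (mulfI m0); rewrite -normCK nm expr1n mulrC plm.
    have hreal : q1 u \is Num.real.
      have h2 : (2 * q1 u)^* = 2 * q1 u by rewrite -slm rmorphD /= cl cm addrC.
      have H : 2 * q1 u \is Num.real by apply/CrealP.
      have -> : q1 u = 2^-1 * (2 * q1 u) by rewrite mulKf.
      by rewrite rpredM // rpredV realn.
    apply: int_small; last exact: le2 _ _ _ nl nm slm.
    by apply: Cint_rat_Aint => //; apply: (real_inK _ d0).
  have hq0 : q1 u = 1 \/ q1 u = -1 -> [/\ qi u = 0, qj u = 0 & qk u = 0].
    move=> ht.
    have E : qi u ^+ 2 + qj u ^+ 2 + qk u ^+ 2 + 0 ^+ 2 = 0.
      transitivity (qnorm u - q1 u ^+ 2); first by rewrite /qnorm; ring.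
      by rewrite N1; case: ht => ->; rewrite ?sqrrN expr1n subrr.
    by have [-> -> -> _] := anis4 _ d0 hd _ _ _ _ Ki Kj Kk (inK0 d) E.
  have pow1 : qpow u 1 = u by rewrite /= qmul1l.
  have pow2 : qpow u 2 = qmul u u by rewrite /= qmul1l.
  have sq0 : q1 u = 0 -> qmul u u = qconst (-1).
    move=> t0; rewrite part1 N1 t0; case: u {K1 A1 Ki Ai Kj Aj Kk Ak N1 tors_t hq0 pow1 pow2 t0} => *.
    rewrite /qsub /qadd /qscale /qconst /=; congr Quat; ring.
  have pow3 : q1 u = 0 -> q1 (qpow u 3) = 0.
    move=> t0; have -> : qpow u 3 = qmul (qmul u u) u by rewrite /= qmul1l.
    rewrite sq0 // /qmul /qconst /= t0; ring.
  have pow4 : q1 u = 0 -> qpow u 4 = qone.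
    move=> t0; have -> : qpow u 4 = qmul (qmul u u) (qmul u u) by rewrite [qpow _ _]/= qmul1l qmulA.
    rewrite sq0 // /qmul /qconst /qone /=; congr Quat; ring.
  have scal : forall c, q1 u = c -> [/\ qi u = 0, qj u = 0 & qk u = 0] -> forall k, qpow u k = Quat (c ^+ k) 0 0 0.
    by move=> c <- [hi hj hk] k; rewrite qpow_scalar.
  split.
    split; first exact: tors_t.
    case=> [t1|[t0|t1]].
    + have [hi hj hk] := hq0 (or_intror t1).
      exists 2%N; split => //; rewrite (scal _ t1) //= /qone /qconst; congr Quat; ring.
    + by exists 4%N; split => //; apply: pow4.
    + have [hi hj hk] := hq0 (or_introl t1).
      exists 1%N; split => //; rewrite (scal _ t1) //= /qone /qconst; congr Quat; ring.
  move=> /tors_t [t1|[t0|t1]].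
  + have [hi hj hk] := hq0 (or_intror t1).
    right; left; split => //; split.
      rewrite (scal _ t1) //= /qone /qconst; congr Quat; ring.
    case=> [|[|//]] // _ _; rewrite (scal _ t1) // => /(congr1 q1) /= /eqP.
    by rewrite expr1 (negbTE m1neq1).
  + right; right; split => //; split; first exact: pow4.
    case=> [|[|[|[|//]]]] // _ _.
    * by rewrite pow1 => /(congr1 q1); rewrite t0 /= => /eqP; rewrite eq_sym oner_eq0.
    * by rewrite pow2 sq0 // => /(congr1 q1) /= /eqP; rewrite (negbTE m1neq1).
    * by move=> /(congr1 q1); rewrite pow3 // /= => /eqP; rewrite eq_sym oner_eq0.
  + have [hi hj hk] := hq0 (or_introl t1).
    left; split => //; split; first by rewrite pow1; case: u {scal pow1 pow2 sq0 pow3 pow4 tors_t hq0 K1 A1 Ki Ai Kj Aj Kk Ak N1} t1 hi hj hk => /= ? ? ? ? -> -> -> ->.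
    by case=> [|//].
- move=> Nm1 n n0 hn.
  have [l [m [nl nm slm plm]]] := tors_roots _ _ n0 hn.
  rewrite Nm1 in plm.
  set t := q1 u.
  have l0 : l != 0 by rewrite -normr_eq0 nl oner_eq0.
  have m0 : m != 0 by rewrite -normr_eq0 nm oner_eq0.
  have cl : l^* = - m by apply: (mulfI l0); rewrite -normCK nl expr1n mulrN plm opprK.
  have cm : m^* = - l by apply: (mulfI m0); rewrite -normCK nm expr1n mulrN mulrC plm opprK.
  have ct : t^* = - t.
    have h2 : (2 * t)^* = 2 * - t by rewrite mulrN -slm rmorphD /= cl cm; ring.
    by apply: (mulfI two0); rewrite -h2 rmorphM /= rmorph_nat.
  have t2 : t ^+ 2 = - (`|t| ^+ 2) by rewrite normCK ct mulrN opprK expr2.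
  have hle := le2 _ _ _ nl nm slm.
  have t2int : t ^+ 2 \is a Num.int.
    apply: Cint_rat_Aint; last by rewrite rpredX.
    apply: (real_inK _ d0); first by rewrite expr2; apply: inK_mul.
    by rewrite t2 rpredN rpredX // normr_real.
  have t2le : `|t ^+ 2| <= 1 by rewrite normrX expr_le1 // normr_ge0.
  have [h|[h|h]] := int_small _ t2int t2le.
  + have E : t ^+ 2 + 1 ^+ 2 + 0 ^+ 2 + 0 ^+ 2 = 0 by rewrite h; ring.
    have [_ h1 _ _] := anis4 _ d0 hd _ _ _ _ K1 (inK1 d) (inK0 d) (inK0 d) E.
    by move/eqP: h1; rewrite oner_eq0.
  + have tz : t = 0 by apply/eqP; rewrite -sqrf_eq0 h.
    have E : qi u ^+ 2 + qj u ^+ 2 + qk u ^+ 2 + 1 ^+ 2 = 0.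
      transitivity (qnorm u - t ^+ 2 + 1); first by rewrite /qnorm /t; ring.
      by rewrite Nm1 tz; ring.
    have [_ _ _ h1] := anis4 _ d0 hd _ _ _ _ Ki Kj Kk (inK1 d) E.
    by move/eqP: h1; rewrite oner_eq0.
  + have h' : - (`|t| ^+ 2) = 1 by rewrite -t2.
    have : - (`|t| ^+ 2) <= 0 by rewrite oppr_le0 exprn_ge0.
    by rewrite h' ler10.
Qed.
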